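(* Let $K=2$ and suppose that for every horizon $T$ (a multiple of $100$) a valid pair $(\eta,\gamma)=(\eta_T,\gamma_T)$ in the non-trivial regime is chosen. Then there exists $T_0$ such that for all $T\ge T_0$, WSU-UX run on the two-phase loss sequence satisfies $$\mathbb{E}\Bigl[\sum_{t=1}^T\Bigl(\hat\ell_{t,1}-\sum_{j\in\{1,2\}}\pi_{t,j}\hat\ell_{t,j}\Bigr)^2\Bigr]\ge \frac{1}{1600}\,\frac{TK}{\gamma}.$$
   Context: WSU-UX. Fix integers $K\ge 2$ and $T\ge 1$ and hyperparameters $\eta,\gamma$. The pair $(\eta,\gamma)$ is called valid if $\eta,\gamma\in(0,1/2)$ and $\eta K/\gamma\le 1/2$. Given a fixed loss sequence $\ell_t\in[0,1]^K$, WSU-UX sets $\pi_{1,i}=1/K$ and in each round $t$: forms $\tilde\pi_{t,i}=(1-\gamma)\pi_{t,i}+\gamma/K$; draws $I_t$ with $\Pr(I_t=i\mid\mathcal F_{t-1})=\tilde\pi_{t,i}$; sets $\hat\ell_{t,i}=\ell_{t,i}\mathbf 1[I_t=i]/\tilde\pi_{t,i}$; and updates $\pi_{t+1,i}=\pi_{t,i}\bigl(1-\eta(\hat\ell_{t,i}-\sum_{j}\pi_{t,j}\hat\ell_{t,j})\bigr)$; $\mathcal F_t$ is the history generated by $I_1,\dots,I_t$. Non-trivial regime: $\eta\ge T^{-2/3}$ and $\gamma\le T^{-1/3}$. Two-phase loss sequence ($K=2$, $T$ a multiple of $100$, $T_1=T/100$): $\ell_{t,1}=1,\ell_{t,2}=0$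 for $1\le t\le T_1$ and $\ell_{t,1}=0,\ell_{t,2}=1$ for $T_1<t\le T$. *)

(* Defs.v *)
From HB Require Import structures.
From mathcomp Require Import all_boot all_order all_algebra.
From mathcomp Require Import all_classical all_reals.
From mathcomp Require Import exp.
Set Implicit Arguments. Unset Strict Implicit. Unset Printing Implicit Defensive.
Import Order.TTheory GRing.Theory Num.Theory.
Local Open Scope ring_scope.

Section WSUUX.
Variables (R : realType) (K : nat) (eta gamma : R).
(* loss t i = l_{t,i}, rounds t are 1-based: t = 1, ..., T *)
Variable loss : nat -> 'I_K -> R.

Definition valid_params : Prop :=
  0 < eta < 1/2 /\ 0 < gamma < 1/2 /\ eta * K%:R / gamma <= 1/2.

Definition mix (pi : 'I_K -> R) (i : 'I_K) : R :=
  (1 - gamma) * pi i + gamma / K%:R.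

Definition lhat (t : nat) (pi : 'I_K -> R) (It : 'I_K) (i : 'I_K) : R :=
  loss t i * (i == It)%:R / mix pi i.

Definition avg_lhat (t : nat) (pi : 'I_K -> R) (It : 'I_K) : R :=
  \sum_(j < K) pi j * lhat t pi It j.

Definition update (t : nat) (pi : 'I_K -> R) (It : 'I_K) : 'I_K -> R :=
  fun i => pi i * (1 - eta * (lhat t pi It i - avg_lhat t pi It)).

Definition step (st : nat * ('I_K -> R)) (It : 'I_K) : nat * ('I_K -> R) :=
  (st.1.+1, update st.1.+1 st.2 It).

(* pi_{t+1} as a function of the history h = [:: I_1; ...; I_t]
   (pi_1 = uniform, for the empty history) *)
Definition pi_after (h : seq 'I_K) : 'I_K -> R :=
  (foldl step (0%N, fun _ => 1 / K%:R) h).2.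

(* Probability of the full path p = (I_1, ..., I_T) :
   prod_t tilde pi_{t, I_t}, where pi_t depends on I_1..I_{t-1}. *)
Definition path_prob (T : nat) (p : T.-tuple 'I_K) : R :=
  \prod_(t < T) mix (pi_after (take t p)) (tnth p t).

Definition wsu_expect (T : nat) (X : T.-tuple 'I_K -> R) : R :=
  \sum_(p : T.-tuple 'I_K) path_prob p * X p.

(* sum_{t=1}^T (hat l_{t,a} - sum_j pi_{t,j} hat l_{t,j})^2 along path p;
   round t+1 (1-based) corresponds to index t : 'I_T *)
Definition sq_dev_sum (T : nat) (a : 'I_K) (p : T.-tuple 'I_K) : R :=
  \sum_(t < T)
    (lhat t.+1 (pi_after (take t p)) (tnth p t) a
     - avg_lhat t.+1 (pi_after (take t p)) (tnth p t)) ^+ 2.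

End WSUUX.

Definition nontrivial_regime (R : realType) (T : nat) (eta gamma : R) : Prop :=
  (T%:R `^ (- (2%:R / 3%:R)) <= eta) /\ (gamma <= T%:R `^ (- (1 / 3%:R))).

(* Two-phase loss sequence, K = 2, arm 1 = ord0, arm 2 = ord_max (=1);
   T1 = T / 100. *)
Definition two_phase_loss (R : realType) (T : nat) (t : nat) (i : 'I_2) : R :=
  if (t <= T %/ 100)%N then (i == ord0)%:R else (i != ord0)%:R.

Arguments wsu_expect {R K} eta gamma loss T X.
Arguments sq_dev_sum {R K} eta gamma loss T a p.

(* Main.v *)
Require Import Defs.
From HB Require Import structures.
From mathcomp Require Import all_boot all_order all_algebra.
From mathcomp Require Import all_classical all_reals.
From mathcomp Require Import exp.
From mathcomp Require Import ring lra.
Import Order.TTheory GRing.Theory Num.Theory.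
Local Open Scope ring_scope.

Definition uF {R : realType} (g x : R) := (1 - g) * x + g / 2%:R.
Definition fF {R : realType} (g x : R) := (1 - x) ^+ 2 / uF g x.
Definition dF {R : realType} (g z : R) := - ((1 - z) * (uF g z + (1 - g / 2%:R))) / (uF g z) ^+ 2.

Lemma uF_gt0 {R : realType} (g x : R) : 0 < g -> g < 1/2 -> 0 <= x -> 0 < uF g x.
Proof. move=> h0 h1 hx; rewrite /uF; have : 0 <= (1 - g) * x by apply: mulr_ge0 => //; lra. lra. Qed.

Lemma tangent {R : realType} (g y z : R) : 0 < g -> g < 1/2 -> 0 <= y -> 0 <= z ->
  fF g z + dF g z * (y - z) <= fF g y.
Proof.
move=> h0 h1 hy hz.
have uy := uF_gt0 _ _ h0 h1 hy; have uz := uF_gt0 _ _ h0 h1 hz.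
have key : fF g y - (fF g z + dF g z * (y - z)) =
   (1 - g / 2%:R) ^+ 2 * (y - z) ^+ 2 / (uF g y * uF g z ^+ 2).
  rewrite /fF /dF; move: uy uz; rewrite /uF => uy uz.
  field; apply/andP; split; apply/negP => /eqP H; lra.
have : 0 <= (1 - g / 2%:R) ^+ 2 * (y - z) ^+ 2 / (uF g y * uF g z ^+ 2).
  apply: divr_ge0; first by apply: mulr_ge0; apply: sqr_ge0.
  by apply: mulr_ge0; [lra | apply: exprn_ge0; lra].
lra.
Qed.

Lemma dF_le0 {R : realType} (g z : R) : 0 < g -> g < 1/2 -> 0 <= z -> z <= 1 -> dF g z <= 0.
Proof.
move=> h0 h1 hz hz1; have uz := uF_gt0 _ _ h0 h1 hz; rewrite /dF.
rewrite mulNr oppr_le0; apply: divr_ge0; last by apply: exprn_ge0; lra.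
apply: mulr_ge0; lra.
Qed.

Lemma jensen2 {R : realType} (g m0 m1 y0 y1 z : R) : 0 < g -> g < 1/2 ->
  0 <= m0 -> 0 <= m1 -> m0 + m1 = 1 -> 0 <= y0 -> 0 <= y1 -> 0 <= z -> z <= 1 ->
  m0 * y0 + m1 * y1 <= z -> fF g z <= m0 * fF g y0 + m1 * fF g y1.
Proof.
move=> h0 h1 hm0 hm1 hs hy0 hy1 hz hz1 hS.
have t0 := tangent _ _ _ h0 h1 hy0 hz; have t1 := tangent _ _ _ h0 h1 hy1 hz.
have d0 := dF_le0 _ _ h0 h1 hz hz1.
have e0 : m0 * (fF g z + dF g z * (y0 - z)) <= m0 * fF g y0 by apply: ler_wpM2l.
have e1 : m1 * (fF g z + dF g z * (y1 - z)) <= m1 * fF g y1 by apply: ler_wpM2l.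
have e2 : 0 <= dF g z * (m0 * y0 + m1 * y1 - z) by apply: mulr_le0 => //; lra.
have e3 : m0 * (fF g z + dF g z * (y0 - z)) + m1 * (fF g z + dF g z * (y1 - z))
   = fF g z * (m0 + m1) + dF g z * (m0 * y0 + m1 * y1 - z * (m0 + m1)) by ring.
rewrite hs mulr1 in e3.
lra.
Qed.

Lemma fF_ge0 {R : realType} (g x : R) : 0 < g -> g < 1/2 -> 0 <= x -> 0 <= fF g x.
Proof. move=> h0 h1 hx; apply: divr_ge0; [exact: sqr_ge0 | exact/ltW/uF_gt0]. Qed.

Lemma fF_big {R : realType} (g x : R) : 0 < g -> g < 1/2 -> 0 <= x -> x <= g / 2%:R ->
  9%:R / 16%:R / g <= fF g x.
Proof.
move=> h0 h1 hx hx1; have u := uF_gt0 _ _ h0 h1 hx.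
have ul : uF g x <= g by rewrite /uF; nra.
have nl : 9%:R / 16%:R <= (1 - x) ^+ 2 by nra.
have hq : 1 <= g / uF g x by rewrite ler_pdivlMr // mul1r.
rewrite /fF ler_pdivrMr //.
have -> : (1 - x) ^+ 2 / uF g x * g = (1 - x) ^+ 2 * (g / uF g x) by ring.
nra.
Qed.
Lemma sum_tupleS (R : realType) (n : nat) (F : n.+1.-tuple 'I_2 -> R) :
  \sum_(p : n.+1.-tuple 'I_2) F p = \sum_(i : 'I_2) \sum_(q : n.-tuple 'I_2) F [tuple of i :: q].
Proof.
rewrite pair_big /= (reindex (fun u : 'I_2 * n.-tuple 'I_2 => [tuple of u.1 :: u.2])) //=.
exists (fun p => (thead p, [tuple of behead p])) => [[i q] _ | p _].
  by congr pair; apply: val_inj.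
by rewrite -tuple_eta.
Qed.

Lemma sum2 (R : realType) (F : 'I_2 -> R) : \sum_(i < 2) F i = F ord0 + F ord_max.
Proof. by rewrite big_ord_recl big_ord1; congr (_ + F _); apply: val_inj. Qed.

Lemma ord2 (i : 'I_2) : i = ord0 \/ i = ord_max.
Proof. case: i => [[|[|m]] Hm]; [left|right|by []]; exact: val_inj. Qed.

Section Proc.
Variables (R : realType) (eta gamma : R) (loss : nat -> 'I_2 -> R).

Definition st_t := (nat * ('I_2 -> R))%type.
Definition stp (st : st_t) (i : 'I_2) : st_t := step eta gamma loss st i.

Definition pp {n} (st : st_t) (p : n.-tuple 'I_2) : R :=
  \prod_(t < n) mix gamma (foldl stp st (take t p)).2 (tnth p t).
Definition gg (st : st_t) (I : 'I_2) : R :=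
  (lhat gamma loss st.1.+1 st.2 I ord0 - avg_lhat gamma loss st.1.+1 st.2 I) ^+ 2.
Definition DD {n} (st : st_t) (p : n.-tuple 'I_2) : R :=
  \sum_(t < n) gg (foldl stp st (take t p)) (tnth p t).
Definition VV n (st : st_t) : R := \sum_(p : n.-tuple 'I_2) pp st p * DD st p.

Lemma ppS n st i (q : n.-tuple 'I_2) :
  pp st [tuple of i :: q] = mix gamma st.2 i * pp (stp st i) q.
Proof.
rewrite /pp big_ord_recl /= tnth0; congr (_ * _).
by apply: eq_bigr => t _; rewrite tnthS.
Qed.

Lemma DDS n st i (q : n.-tuple 'I_2) :
  DD st [tuple of i :: q] = gg st i + DD (stp st i) q.
Proof.
rewrite /DD big_ord_recl /= tnth0; congr (_ + _).
by apply: eq_bigr => t _; rewrite tnthS.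
Qed.

Lemma lh_same t pi i : lhat gamma loss t pi i i = loss t i / mix gamma pi i.
Proof. by rewrite /lhat eqxx mulr1. Qed.
Lemma lh_diff t pi i j : i != j -> lhat gamma loss t pi j i = 0.
Proof. by move=> /negbTE H; rewrite /lhat H mulr0 mul0r. Qed.
Lemma o01 : (ord0 != ord_max :> 'I_2). Proof. by []. Qed.
Lemma o10 : (ord_max != ord0 :> 'I_2). Proof. by []. Qed.
Lemma avg0 t pi : avg_lhat gamma loss t pi ord0 = pi ord0 * (loss t ord0 / mix gamma pi ord0).
Proof. by rewrite /avg_lhat sum2 lh_same (lh_diff _ _ _ _ o10) mulr0 addr0. Qed.
Lemma avg1 t pi : avg_lhat gamma loss t pi ord_max = pi ord_max * (loss t ord_max / mix gamma pi ord_max).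
Proof. by rewrite /avg_lhat sum2 lh_same (lh_diff _ _ _ _ o01) mulr0 add0r. Qed.

Definition Inv (pi : 'I_2 -> R) := 0 <= pi ord0 /\ 0 <= pi ord_max /\ pi ord0 + pi ord_max = 1.

Lemma stp00 st : st.2 ord0 + st.2 ord_max = 1 ->
  (stp st ord0).2 ord0 = st.2 ord0 - eta * st.2 ord0 * st.2 ord_max * loss st.1.+1 ord0 / mix gamma st.2 ord0.
Proof.
move=> H; rewrite /stp /step /update /= avg0 lh_same.
have -> : st.2 ord_max = 1 - st.2 ord0 by rewrite -H addrC addKr.
ring.
Qed.
Lemma stp01 st : st.2 ord0 + st.2 ord_max = 1 ->
  (stp st ord0).2 ord_max = st.2 ord_max + eta * st.2 ord0 * st.2 ord_max * loss st.1.+1 ord0 / mix gamma st.2 ord0.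
Proof.
move=> H; rewrite /stp /step /update /= avg0 (lh_diff _ _ _ _ o10).
ring.
Qed.
Lemma stp10 st : st.2 ord0 + st.2 ord_max = 1 ->
  (stp st ord_max).2 ord0 = st.2 ord0 + eta * st.2 ord0 * st.2 ord_max * loss st.1.+1 ord_max / mix gamma st.2 ord_max.
Proof.
move=> H; rewrite /stp /step /update /= avg1 (lh_diff _ _ _ _ o01).
ring.
Qed.
Lemma stp11 st : st.2 ord0 + st.2 ord_max = 1 ->
  (stp st ord_max).2 ord_max = st.2 ord_max - eta * st.2 ord0 * st.2 ord_max * loss st.1.+1 ord_max / mix gamma st.2 ord_max.
Proof.
move=> H; rewrite /stp /step /update /= avg1 lh_same.
have -> : st.2 ord0 = 1 - st.2 ord_max by rewrite -H addrK.
ring.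
Qed.

Section Params.
Hypotheses (hg0 : 0 < gamma) (hg1 : gamma < 1/2) (he0 : 0 < eta)
  (hv : eta * 2%:R / gamma <= 1/2) (hl : forall t i, 0 <= loss t i <= 1).
Ltac prep := have hg0' : 0 < gamma := hg0; have hg1' : gamma < 1/2 := hg1;
  have he0' : 0 < eta := he0.

Lemma eta_le : eta <= gamma / 4%:R.
Proof. move: hv; rewrite ler_pdivrMr // => H; lra. Qed.

Lemma Inv_ge0 (pi0 : 'I_2 -> R) i : Inv pi0 -> 0 <= pi0 i.
Proof. by case=> [h0 [h1 _]]; case: (ord2 i) => ->. Qed.
Arguments Inv_ge0 [pi0].

Lemma mix_ge (pi0 : 'I_2 -> R) i : Inv pi0 -> gamma / 2%:R <= mix gamma pi0 i.
Proof.
prep; move=> /(Inv_ge0 i) H; rewrite /mix; have : 0 <= (1 - gamma) * pi0 i.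
  by apply: mulr_ge0 => //; lra.
lra.
Qed.
Arguments mix_ge [pi0].

Lemma mix_gt0 (pi0 : 'I_2 -> R) i : Inv pi0 -> 0 < mix gamma pi0 i.
Proof. prep; move=> /(mix_ge i) H; lra. Qed.
Arguments mix_gt0 [pi0].

Lemma mix_sum (pi0 : 'I_2 -> R) : Inv pi0 -> mix gamma pi0 ord0 + mix gamma pi0 ord_max = 1.
Proof. case=> [_ [_ H]]; rewrite /mix; have -> : pi0 ord_max = 1 - pi0 ord0 by lra. by field. Qed.
Arguments mix_sum [pi0].

Lemma Inv_stp (st : st_t) i : Inv st.2 -> Inv (stp st i).2.
Proof.
move=> HI; prep; have [ha [hb hs]] := HI.
have he := eta_le.
case: (ord2 i) => ->.
- have hm := mix_ge ord0 HI; have hm0 := mix_gt0 ord0 HI.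
  have [hl0 hl1] := andP (hl st.1.+1 ord0).
  rewrite /Inv stp00 // stp01 //.
  have hx : 0 <= eta * st.2 ord0 * st.2 ord_max * loss st.1.+1 ord0 / mix gamma st.2 ord0.
    apply: divr_ge0; last lra.
    apply: mulr_ge0 => //; apply: mulr_ge0 => //; apply: mulr_ge0 => //; lra.
  split; last (split; lra).
  have -> : st.2 ord0 - eta * st.2 ord0 * st.2 ord_max * loss st.1.+1 ord0 / mix gamma st.2 ord0
     = st.2 ord0 * (mix gamma st.2 ord0 - eta * st.2 ord_max * loss st.1.+1 ord0) / mix gamma st.2 ord0.
    field; lra.
  apply: divr_ge0; last lra.
  apply: mulr_ge0 => //.
  have : eta * st.2 ord_max * loss st.1.+1 ord0 <= eta.
    have : st.2 ord_max * loss st.1.+1 ord0 <= 1 by nra.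
    nra.
  lra.
- have hm := mix_ge ord_max HI; have hm0 := mix_gt0 ord_max HI.
  have [hl0 hl1] := andP (hl st.1.+1 ord_max).
  rewrite /Inv stp10 // stp11 //.
  have hx : 0 <= eta * st.2 ord0 * st.2 ord_max * loss st.1.+1 ord_max / mix gamma st.2 ord_max.
    apply: divr_ge0; last lra.
    apply: mulr_ge0 => //; apply: mulr_ge0 => //; apply: mulr_ge0 => //; lra.
  split; first lra.
  split; last lra.
  have -> : st.2 ord_max - eta * st.2 ord0 * st.2 ord_max * loss st.1.+1 ord_max / mix gamma st.2 ord_max
     = st.2 ord_max * (mix gamma st.2 ord_max - eta * st.2 ord0 * loss st.1.+1 ord_max) / mix gamma st.2 ord_max.
    field; lra.
  apply: divr_ge0; last lra.
  apply: mulr_ge0 => //.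
  have : eta * st.2 ord0 * loss st.1.+1 ord_max <= eta.
    have : st.2 ord0 * loss st.1.+1 ord_max <= 1 by nra.
    nra.
  lra.
Qed.
Arguments Inv_stp [st].

Lemma pp_ge0 n st (p : n.-tuple 'I_2) : Inv st.2 -> 0 <= pp st p.
Proof.
elim: n st p => [|n IH] st p HI; first by rewrite /pp big_ord0.
rewrite (tuple_eta p) ppS; apply: mulr_ge0; last exact/IH/Inv_stp.
exact/ltW/mix_gt0.
Qed.

Lemma pp_sum n st : Inv st.2 -> \sum_(p : n.-tuple 'I_2) pp st p = 1.
Proof.
elim: n st => [|n IH] st HI.
  rewrite (big_pred1 [tuple]) ?/pp ?big_ord0 // => p; rewrite !inE.
  by apply/esym/eqP/val_inj; case: p => [[]].
rewrite sum_tupleS sum2 -(mix_sum HI).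
have H i : \sum_(q : n.-tuple 'I_2) pp st [tuple of i :: q] = mix gamma st.2 i.
  by rewrite -[RHS]mulr1 -(IH (stp st i) (Inv_stp i HI)) mulr_sumr; apply: eq_bigr => q _; rewrite ppS.
by rewrite !H.
Qed.

Lemma VVS n st : Inv st.2 ->
  VV n.+1 st = \sum_(i < 2) mix gamma st.2 i * (gg st i + VV n (stp st i)).
Proof.
move=> HI; rewrite /VV sum_tupleS; apply: eq_bigr => i _.
rewrite mulrDr -(mulr1 (gg st i)) -(pp_sum n (stp st i) (Inv_stp i HI)) mulr_sumr mulr_sumr mulr_sumr -big_split.
apply: eq_bigr => q _ /=; rewrite ppS DDS; ring.
Qed.

Lemma VV_ge0 n st : Inv st.2 -> 0 <= VV n st.
Proof.
move=> HI; apply: sumr_ge0 => p _; apply: mulr_ge0; first exact: pp_ge0.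
by apply: sumr_ge0 => t _; exact: sqr_ge0.
Qed.


Variable T1 : nat.
Hypothesis hph : forall s, (s < T1)%N -> loss s.+1 ord0 = 1 /\ loss s.+1 ord_max = 0.

Lemma ph_gg (st : st_t) : Inv st.2 -> (st.1 < T1)%N ->
  \sum_(i < 2) mix gamma st.2 i * gg st i = fF gamma (st.2 ord0).
Proof.
move=> HI hs; have [l0 l1] := hph _ hs; have m0 := mix_gt0 ord0 HI.
rewrite sum2 /gg lh_same (lh_diff _ _ _ _ o01) avg0 avg1 l0 l1 /fF.
have -> : uF gamma (st.2 ord0) = mix gamma st.2 ord0 by [].
rewrite !mul0r mulr0 subrr expr0n /= mulr0 addr0.
field; apply/negP => /eqP H; lra.
Qed.

Lemma ph_stp0 (st : st_t) : Inv st.2 -> (st.1 < T1)%N ->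
  (stp st ord0).2 ord0 = st.2 ord0 - eta * st.2 ord0 * st.2 ord_max / mix gamma st.2 ord0.
Proof. by move=> [_ [_ H]] hs; rewrite stp00 // (hph _ hs).1 mulr1. Qed.

Lemma ph_stp1 (st : st_t) : Inv st.2 -> (st.1 < T1)%N ->
  (stp st ord_max).2 ord0 = st.2 ord0.
Proof. by move=> [_ [_ H]] hs; rewrite stp10 // (hph _ hs).2 mulr0 mul0r addr0. Qed.

Definition cc := 1 - eta / 2%:R.

Lemma VV_lb n : forall st : st_t, Inv st.2 -> ((st.1 < T1)%N -> st.2 ord0 <= 1/2) ->
  \sum_(k < n) (if (st.1 + k < T1)%N then fF gamma (st.2 ord0 * cc ^+ k) else 0) <= VV n st.
Proof.
elim: n => [|n IH] st HI Hh.
  by rewrite big_ord0; apply: VV_ge0.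
case: (ltnP st.1 T1) => hs; last first.
  rewrite big1; first exact: VV_ge0.
  move=> k _; rewrite ifF //; apply/negbTE; rewrite -leqNgt.
  exact: (leq_trans hs (leq_addr _ _)).
prep.
have ha := Hh hs.
have [ha0 [hb0 hab]] := HI.
have m0 := mix_gt0 ord0 HI; have m1 := mix_gt0 ord_max HI.
have ms := mix_sum HI.
have he := eta_le.
rewrite VVS // sum2 !mulrDr addrACA.
have -> : mix gamma st.2 ord0 * gg st ord0 + mix gamma st.2 ord_max * gg st ord_max
   = fF gamma (st.2 ord0) by rewrite -ph_gg // sum2.
rewrite big_ord_recl addn0 hs expr0 mulr1 lerD2l.
set a := st.2 ord0.
set a0 := (stp st ord0).2 ord0.
have Ha0 : a0 = a - eta * a * st.2 ord_max / mix gamma st.2 ord0 by exact: ph_stp0.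
have Ha1 : (stp st ord_max).2 ord0 = a by exact: ph_stp1.
have HI0 := Inv_stp ord0 HI; have HI1 := Inv_stp ord_max HI.
have hx : 0 <= eta * a * st.2 ord_max / mix gamma st.2 ord0.
  by apply: divr_ge0; [apply: mulr_ge0 => //; apply: mulr_ge0 => //; lra | lra].
have a0le : a0 <= a by lra.
have a0ge : 0 <= a0 by have [] := HI0.
have IH0 := IH (stp st ord0) HI0 (fun _ => le_trans a0le ha).
have IH1 := IH (stp st ord_max) HI1 (fun _ => ltac:(rewrite Ha1; exact: ha)).
rewrite Ha1 in IH1.
have E : mix gamma st.2 ord0 * a0 + mix gamma st.2 ord_max * a = a - eta * a * st.2 ord_max.
  rewrite Ha0.
  have -> : mix gamma st.2 ord_max = 1 - mix gamma st.2 ord0 by lra.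
  field; apply/negP => /eqP H; lra.
have hc0 : 0 <= cc by rewrite /cc; lra.
have hc1 : cc <= 1 by rewrite /cc; lra.
apply: le_trans (lerD (ler_wpM2l (ltW m0) IH0) (ler_wpM2l (ltW m1) IH1)).
rewrite !mulr_sumr -big_split /=; apply: ler_sum => k _.
have -> : ((stp st ord0).1 + k)%N = (st.1 + (lift ord0 k))%N by rewrite /= addSnnS.
have -> : bump 0 k = k.+1 by [].
have -> : (lift ord0 k : nat) = k.+1 by [].
change (update eta gamma loss st.1.+1 st.2 ord0 ord0) with a0.
case: ifP => _; last by rewrite !mulr0 addr0.
have ck0 : 0 <= cc ^+ k by apply: exprn_ge0.
have ck1 : cc ^+ k <= 1 by apply: exprn_ile1.
apply: jensen2 => //; try lra.
- by apply: mulr_ge0.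
- by apply: mulr_ge0.
- by apply: mulr_ge0 => //; apply: exprn_ge0.
- have h1 : cc ^+ k.+1 <= 1 by apply: exprn_ile1.
  have : a * cc ^+ k.+1 <= a by apply: ler_piMr.
have ha2 : a <= 1/2 := ha. lra.
- have h2 : a - eta * a * st.2 ord_max <= a * cc.
    rewrite /cc; have hb : 1/2 <= st.2 ord_max by lra.
    have hea : 0 <= eta * a by apply: mulr_ge0; lra.
    nra.
  have -> : mix gamma st.2 ord0 * (a0 * cc ^+ k) + mix gamma st.2 ord_max * (a * cc ^+ k)
     = cc ^+ k * (mix gamma st.2 ord0 * a0 + mix gamma st.2 ord_max * a) by ring.
  rewrite E exprS.
  have := ler_wpM2l ck0 h2.
  have -> : a * (cc * cc ^+ k) = cc ^+ k * (a * cc) by ring.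
  done.
Qed.

End Params.
End Proc.

Lemma foldl_fst (R : realType) (eta gamma : R) (loss : nat -> 'I_2 -> R) (h : seq 'I_2) :
  forall st, (foldl (stp R eta gamma loss) st h).1 = (st.1 + size h)%N.
Proof. elim: h => [|x h IH] st /=; first by rewrite addn0. by rewrite IH /= addSnnS. Qed.

Lemma link (R : realType) (eta gamma : R) (loss : nat -> 'I_2 -> R) (T : nat) :
  wsu_expect eta gamma loss T (sq_dev_sum eta gamma loss T ord0)
  = VV R eta gamma loss T (0%N, fun _ => 1 / 2%:R).
Proof.
rewrite /wsu_expect /VV; apply: eq_bigr => p _; congr (_ * _).
rewrite /sq_dev_sum /DD; apply: eq_bigr => t _.
rewrite /gg foldl_fst /= size_take size_tuple ltn_ord.
by [].
Qed.

Lemma count_lb (R : realType) (F : nat -> R) (B : R) (k0 m n : nat) : 0 <= B ->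
  (forall k, 0 <= F k) -> (forall k, (k0 <= k)%N -> B <= F k) ->
  ((minn n m) - k0)%:R * B <= \sum_(k < n) (if (k < m)%N then F k else 0).
Proof.
move=> hB hF hK; elim: n => [|n IH].
  by rewrite big_ord0 min0n sub0n mul0r.
rewrite big_ord_recr /=; change (nat_of_ord (@ord_max n)) with n.
have hS : 0 <= \sum_(k < n) (if (k < m)%N then F k else 0).
  by apply: sumr_ge0 => k _; case: ifP => // _; exact: hF.
case: (ltnP n m) => h.
  have -> : minn n.+1 m = n.+1 by apply/minn_idPl.
  have e : minn n m = n by apply/minn_idPl/ltnW.
  rewrite e in IH.
  case: (leqP k0 n) => hk.
    rewrite subSn // -addn1 natrD mulrDl mul1r; exact: lerD IH (hK n hk).
  have -> : (n.+1 - k0)%N = 0%N by apply/eqP; rewrite subn_eq0.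
  by rewrite mul0r; apply: addr_ge0 => //; exact: hF.
have -> : minn n.+1 m = m by apply/minn_idPr/(leq_trans h).
have e : minn n m = m by apply/minn_idPr.
by rewrite e in IH; rewrite addr0.
Qed.

Lemma bern (R : realType) (x : R) (n : nat) : 0 <= x -> x <= 1 ->
  (1 - x) ^+ n * (1 + n%:R * x) <= 1.
Proof.
move=> h0 h1; elim: n => [|n IH]; first by rewrite expr0 mul0r addr0 mulr1.
have hp : 0 <= (1 - x) ^+ n by apply: exprn_ge0; lra.
have e : (1 - x) ^+ n.+1 * (1 + n.+1%:R * x) =
   (1 - x) ^+ n * (1 + n%:R * x) - (1 - x) ^+ n * (n.+1%:R * x ^+ 2).
  by rewrite exprS -addn1 natrD; ring.
have : 0 <= (1 - x) ^+ n * (n.+1%:R * x ^+ 2).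
  by apply: mulr_ge0 => //; apply: mulr_ge0 => //; exact: sqr_ge0.
lra.
Qed.

Lemma natrB_ge (R : realType) (a b : nat) : (a%:R - b%:R : R) <= (a - b)%:R.
Proof.
case: (leqP b a) => h; first by rewrite natrB.
have -> : (a - b)%N = 0%N by apply/eqP; rewrite subn_eq0 ltnW.
have : (a%:R : R) <= b%:R by rewrite ler_nat ltnW.
move=> hh; rewrite subr_le0 //.
Qed.

Theorem claim2 (R : realType) (etaT gammaT : nat -> R) :
  (forall T : nat, (0 < T)%N -> (100 %| T)%N ->
     valid_params 2 (etaT T) (gammaT T) /\
     nontrivial_regime T (etaT T) (gammaT T)) ->
  exists T0 : nat, forall T : nat, (T0 <= T)%N -> (0 < T)%N -> (100 %| T)%N ->
    wsu_expect (etaT T) (gammaT T) (@two_phase_loss R T) T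
      (sq_dev_sum (etaT T) (gammaT T) (@two_phase_loss R T) T ord0)
    >= 1 / 1600%:R * (T%:R * 2%:R / gammaT T).
Proof.
move=> H.
exists (1100 ^ 6)%N => T hT0 hT hdiv.
have hT0r : (1100%:R : R) ^+ 6 <= T%:R.
  rewrite -natrX ler_nat; exact: hT0.
clear hT0.
have [[/andP [he0 he1] [/andP [hg0 hg1] hv]] [hreg _]] := H T hT hdiv.
move: he0 he1 hg0 hg1 hv hreg; move: (etaT T) (gammaT T) => eta gamma he0 he1 hg0 hg1 hv hreg.
have hl : forall t i, 0 <= @two_phase_loss R T t i <= 1.
  move=> t i; rewrite /two_phase_loss.
  by case: ifP => _; case: (i == ord0) => /=; apply/andP; split; rewrite ?ler01 ?lexx.
have hph : forall s, (s < T %/ 100)%N ->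
    @two_phase_loss R T s.+1 ord0 = 1 /\ @two_phase_loss R T s.+1 ord_max = 0.
  move=> s hs; have hs' : (s.+1 <= T %/ 100)%N := hs.
  by rewrite /two_phase_loss hs' eqxx.
rewrite link.
have HI0 : Inv R (0%N, fun _ : 'I_2 => 1 / 2%:R : R).2.
  by rewrite /Inv /=; split; [|split]; [lra|lra|lra].
have LB := VV_lb R eta gamma (@two_phase_loss R T) hg0 hg1 he0 hv hl (T %/ 100) hph T
  (0%N, fun _ : 'I_2 => 1 / 2%:R : R) HI0 (fun _ => lexx _).
have he : eta <= gamma / 4%:R by move: hv; rewrite ler_pdivrMr // => hh; lra.
set Tr : R := T%:R.
have hTr0 : 0 <= Tr by rewrite /Tr ler0n.
set w : R := Tr `^ (1 / 6%:R).
have hw0 : 0 <= w by apply: powR_ge0.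
have hw6 : w ^+ 6 = Tr.
  rewrite -powR_mulrn // -powRrM.
  have -> : 1 / 6%:R * 6%:R = 1 :> R by field.
  by rewrite powRr1.
have hw4 : w ^+ 4 = Tr `^ (2%:R / 3%:R).
  rewrite -powR_mulrn // -powRrM.
  by congr (_ `^ _); field.
rewrite /nontrivial_regime powRN -hw4 in hreg.
have h1100 : 1100%:R <= w.
  rewrite -(ler_pXn2r (isT : (0 < 6)%N)) ?nnegrE ?ler0n //.
  by rewrite hw6.
have h4 : 1 <= w ^+ 4 by apply: exprn_ege1; lra.
set W5 := w ^+ 5.
have hW5 : W5 = w * w ^+ 4 by rewrite /W5 exprS.
have hW58 : 8%:R <= W5.
  have : w * 1 <= w * w ^+ 4 by apply: ler_wpM2l.
  rewrite mulr1 -hW5 => hh; lra.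
have hTW : Tr = w * W5 by rewrite -hw6 /W5 exprS.
clearbody W5.
have hw4p : 0 < w ^+ 4 by lra.
have heta : 1 <= eta * w ^+ 4.
  by rewrite -[X in X <= _]div1r ler_pdivrMr // in hreg.
set m := (Num.trunc (2%:R * w / eta)).+1.
have hm1 : 2%:R * w < m%:R * eta.
  by rewrite -ltr_pdivrMr //; apply: truncnS_gt.
have hm2 : m%:R <= 2%:R * W5 + 1.
  rewrite /m -addn1 natrD lerD2r.
  apply: le_trans (_ : 2%:R * w / eta <= _).
    by rewrite truncn_le; apply: divr_ge0; lra.
  rewrite ler_pdivrMr //.
  have : 0 <= 2%:R * w * (eta * w ^+ 4 - 1) by apply: mulr_ge0; lra.
  have -> : 2%:R * w * (eta * w ^+ 4 - 1) = 2%:R * W5 * eta - 2%:R * w by rewrite hW5; ring.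
  lra.
clearbody m.
set y := cc R eta ^+ m.
have hc0 : 0 <= cc R eta by rewrite /cc; lra.
have hc1 : cc R eta <= 1 by rewrite /cc; lra.
have hy0 : 0 <= y by apply: exprn_ge0.
have hb := bern R (eta / 2%:R) m.
have hyw : y * w <= 1.
  have hb' : y * (1 + m%:R * (eta / 2%:R)) <= 1 by apply: hb; lra.
  have : w <= 1 + m%:R * (eta / 2%:R) by lra.
  move=> hh; have := ler_wpM2l hy0 hh; lra.
have hy4 : y ^+ 4 <= eta.
  have : (y * w) ^+ 4 <= 1 by apply: exprn_ile1 => //; apply: mulr_ge0.
  rewrite exprMn => hh.
  have : y ^+ 4 <= 1 / w ^+ 4 by rewrite ler_pdivlMr.
  move=> hh2; apply: le_trans hh2 _.
  by rewrite ler_pdivrMr // mulrC.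
set k0 := (4 * m)%N.
have hk0 : cc R eta ^+ k0 = y ^+ 4 by rewrite /y -exprM mulnC.
clearbody y.
have CNT := count_lb R (fun k => fF gamma (1 / 2%:R * cc R eta ^+ k))
   (9%:R / 16%:R / gamma) k0 (T %/ 100) T.
have hB : 0 <= 9%:R / 16%:R / gamma by apply: divr_ge0; lra.
have hF : forall k, 0 <= fF gamma (1 / 2%:R * cc R eta ^+ k).
  move=> k; apply: fF_ge0 => //; apply: mulr_ge0; [lra | exact: exprn_ge0].
have hK : forall k, (k0 <= k)%N -> 9%:R / 16%:R / gamma <= fF gamma (1 / 2%:R * cc R eta ^+ k).
  move=> k hk; apply: fF_big => //.
    by apply: mulr_ge0; [lra | exact: exprn_ge0].
  have : cc R eta ^+ k <= cc R eta ^+ k0 by apply: ler_wiXn2l.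
  lra.
have {CNT} CNT := CNT hB hF hK.
have hmin : minn T (T %/ 100) = (T %/ 100)%N by apply/minn_idPr; apply: leq_div.
rewrite hmin in CNT.
have LB2 := le_trans CNT LB.
have hD := natrB_ge R (T %/ 100) k0.
have hT1 : (T %/ 100)%:R * 100%:R = Tr by rewrite -natrM divnK.
have hk0r : k0%:R = 4%:R * m%:R :> R by rewrite /k0 natrM.
set D : R := ((T %/ 100) - k0)%:R in hD LB2 *.
have hTW2 : 1100%:R * W5 <= Tr by rewrite hTW; apply: ler_wpM2r => //; lra.
have key : Tr * 2%:R / 1600%:R <= D * (9%:R / 16%:R) by lra.
apply: le_trans LB2.
have -> : 1 / 1600%:R * (Tr * 2%:R / gamma) = (Tr * 2%:R / 1600%:R) * gamma^-1 by ring.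
have -> : D * (9%:R / 16%:R / gamma) = (D * (9%:R / 16%:R)) * gamma^-1 by ring.
by apply: ler_wpM2r => //; rewrite invr_ge0; lra.
Qed.
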